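(* Let $L\ge1$, $d,k,m$ be positive integers with $m>\max\{d,k\}$, set $a_0=d$, $a_L=k$, $a_\ell=m$ for $1\le\ell\le L-1$, and let $\mathbf W^\ell\in\mathbb R^{a_\ell\times a_{\ell-1}}$ for $\ell=1,\dots,L$. Let $\boldsymbol\Sigma\in\mathbb R^{d\times d}$ be symmetric positive definite and define $$\widehat{\mathbf G}_O=\sum_{\ell=1}^L\big(\mathbf W^{L:\ell+1}\mathbf W^{\ell+1:L}\big)\otimes\big(\boldsymbol\Sigma^{1/2}\mathbf W^{1:\ell-1}\mathbf W^{\ell-1:1}\boldsymbol\Sigma^{1/2}\big)\in\mathbb R^{kd\times kd}.$$ Assume $\alpha_\ell:=\sigma_{\min}^2(\mathbf W^{L:\ell+1})\,\sigma_{\min}^2(\mathbf W^{1:\ell-1})>0$ for all $\ell=1,\dots,L$, and let $\gamma_\ell=\alpha_\ell/\sum_{i=1}^L\alpha_i$. Then $\widehat{\mathbf G}_O$ is positive definite and $$\kappa(\widehat{\mathbf G}_O)\le\kappa(\boldsymbol\Sigma)\sum_{\ell=1}^L\gamma_\ell\,\kappa(\mathbf W^{L:\ell+1})^2\,\kappa(\mathbf W^{1:\ell-1})^2\le\kappa(\boldsymbol\Sigma)\max_{1\le\ell\le L}\Big\{\kappa(\mathbf W^{L:\ell+1})^2\,\kappa(\mathbf W^{1:\ell-1})^2\Big\}.$$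
   Context: Notation: for $i>j$, $\mathbf W^{i:j}=\mathbf W^i\mathbf W^{i-1}\cdots\mathbf W^j$; for $i<j$, $\mathbf W^{i:j}=(\mathbf W^i)^\top(\mathbf W^{i+1})^\top\cdots(\mathbf W^j)^\top$ (so $\mathbf W^{\ell+1:L}=(\mathbf W^{L:\ell+1})^\top$ and $\mathbf W^{1:\ell-1}=(\mathbf W^{\ell-1:1})^\top$). Empty products are identities: $\mathbf W^{L:L+1}=\mathbf W^{L+1:L}=\mathbf I_k$ and $\mathbf W^{1:0}=\mathbf W^{0:1}=\mathbf I_d$. $\widehat{\mathbf G}_O$ has the same nonzero eigenvalues as the Gauss–Newton matrix of the linear network $F(\mathbf x)=\mathbf W^L\cdots\mathbf W^1\mathbf x$ with input covariance $\boldsymbol\Sigma$. $\boldsymbol\Sigma^{1/2}$ is the positive semidefinite square root, $\otimes$ the Kronecker product. For a symmetric positive definite matrix $\mathbf A$, $\kappa(\mathbf A)=\lambda_{\max}(\mathbf A)/\lambda_{\min}(\mathbf A)$. For a rectangular $\mathbf A\in\mathbb R^{p\times q}$, $\sigma_{\max}(\mathbf A)$ is its largest singular value, $\sigma_{\min}(\mathbf A)$ its $\min(p,q)$-th largest singular value, and $\kappa(\mathbf A)=\sigma_{\max}(\mathbf A)/\sigma_{\min}(\mathbf A)$ (for identity matrices, $\kappa=1$, $\sigma_{\min}=1$). *)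

(* Defs.v *)
From HB Require Import structures.
From mathcomp Require Import all_boot all_order all_algebra.
From mathcomp Require Import polyrcf mxtens.
From Stdlib Require Import ClassicalEpsilon.
Set Implicit Arguments. Unset Strict Implicit. Unset Printing Implicit Defensive.
Import Order.TTheory GRing.Theory Num.Theory.
Local Open Scope ring_scope.

Section Defs.
Variable R : rcfType.

Definition posdefmx n (A : 'M[R]_n) : Prop :=
  A^T = A /\ forall v : 'rV[R]_n, v != 0 -> 0 < (v *m A *m v^T) 0 0.
Definition psdmx n (A : 'M[R]_n) : Prop :=
  A^T = A /\ forall v : 'rV[R]_n, 0 <= (v *m A *m v^T) 0 0.

(* real eigenvalues (roots of the characteristic polynomial; for a symmetric
   matrix these are all its eigenvalues) *)
Definition eigs n (A : 'M[R]_n) : seq R := rootsR (char_poly A).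
Definition lambda_max n (A : 'M[R]_n) : R :=
  \big[Num.max/head 0 (eigs A)]_(x <- eigs A) x.
Definition lambda_min n (A : 'M[R]_n) : R :=
  \big[Num.min/head 0 (eigs A)]_(x <- eigs A) x.
Definition kappa_sym n (A : 'M[R]_n) : R := lambda_max A / lambda_min A.

(* singular values of a rectangular p x q matrix: the min(p,q) singular values
   are the square roots of the eigenvalues of the smaller Gram matrix *)
Definition sigma_max p q (A : 'M[R]_(p, q)) : R :=
  if (p <= q)%N then Num.sqrt (lambda_max (A *m A^T))
  else Num.sqrt (lambda_max (A^T *m A)).
Definition sigma_min p q (A : 'M[R]_(p, q)) : R :=
  if (p <= q)%N then Num.sqrt (lambda_min (A *m A^T))
  else Num.sqrt (lambda_min (A^T *m A)).
Definition kappa_mx p q (A : 'M[R]_(p, q)) : R := sigma_max A / sigma_min A.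

Definition sqrt_psd n (A : 'M[R]_n) : 'M[R]_n :=
  epsilon (inhabits 0) (fun S => psdmx S /\ S *m S = A).

Definition width (d k m L j : nat) : nat :=
  if j == 0%N then d else if j == L then k else m.

Variables (d k m L : nat).
Local Notation a := (width d k m L).
(* W l is the weight matrix W^{l+1} : a_{l+1} x a_l  (0-based index) *)
Variable W : forall l : nat, 'M[R]_(a l.+1, a l).

(* W^{g+i : i+1} = W^{g+i} ... W^{i+1}  (1-based), of size a_{g+i} x a_i *)
Fixpoint prodW (i g : nat) : 'M[R]_(a (g + i), a i) :=
  match g with
  | 0 => 1%:M
  | g'.+1 => W (g' + i) *m prodW i g'
  end.

(* W^{j:1} = W^j ... W^1, of size a_j x d *)
Fixpoint prodBot (j : nat) : 'M[R]_(a j, a 0) :=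
  match j with
  | 0 => 1%:M
  | j'.+1 => W j' *m prodBot j'
  end.

Lemma width_top (l : 'I_L) : a ((L - l.+1) + l.+1) = k.
Proof.
rewrite subnK ?ltn_ord // /width; case: L l => [[]//|L' l] /=; by rewrite eqxx.
Qed.

(* for l : 'I_L, with ell = l+1 the paper's index:
   Wtop l = W^{L:ell+1} (k x a_ell), Wbot l = W^{ell-1:1} (a_{ell-1} x d) *)
Definition Wtop (l : 'I_L) : 'M[R]_(k, a l.+1) :=
  castmx (width_top l, erefl) (prodW l.+1 (L - l.+1)).
Definition Wbot (l : 'I_L) : 'M[R]_(a l, d) := prodBot l.

Definition GO (Sigma : 'M[R]_d) : 'M[R]_(k * d) :=
  \sum_(l < L) ((Wtop l *m (Wtop l)^T) *t
     (sqrt_psd Sigma *m ((Wbot l)^T *m Wbot l) *m sqrt_psd Sigma)).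

Definition alpha (l : 'I_L) : R :=
  sigma_min (Wtop l) ^+ 2 * sigma_min (Wbot l)^T ^+ 2.
End Defs.

(* Main.v *)
Require Import Defs.
From HB Require Import structures.
From mathcomp Require Import all_boot all_order all_algebra.
From mathcomp Require Import polyrcf mxtens.
From mathcomp Require Import complex ring.
From Stdlib Require Import ClassicalEpsilon.
Import Order.TTheory GRing.Theory Num.Theory.
Local Open Scope ring_scope.
Set Implicit Arguments. Unset Strict Implicit. Unset Printing Implicit Defensive.

Section Basic.
Variable R : rcfType.

Definition dotv n (v : 'rV[R]_n) : R := (v *m v^T) 0 0.
Definition qf n (A : 'M[R]_n) (v : 'rV[R]_n) : R := (v *m A *m v^T) 0 0.

Lemma dotvE n (v : 'rV[R]_n) : dotv v = \sum_i v 0 i ^+ 2.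
Proof. by rewrite /dotv mxE; apply: eq_bigr => i _; rewrite mxE expr2. Qed.

Lemma dotv_ge0 n (v : 'rV[R]_n) : 0 <= dotv v.
Proof. by rewrite dotvE sumr_ge0 // => i _; rewrite sqr_ge0. Qed.

Lemma dotv_eq0 n (v : 'rV[R]_n) : (dotv v == 0) = (v == 0).
Proof.
apply/idP/idP; last by move/eqP->; rewrite /dotv mul0mx mxE.
rewrite dotvE psumr_eq0 => [|i _]; last by rewrite sqr_ge0.
move/allP => H; apply/eqP/rowP => i; rewrite mxE.
by have /(_ (mem_index_enum i)) := H i; rewrite /= sqrf_eq0 => /eqP.
Qed.

Lemma dotv_gt0 n (v : 'rV[R]_n) : v != 0 -> 0 < dotv v.
Proof. by move=> nz; rewrite lt_def dotv_ge0 dotv_eq0 nz. Qed.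

Lemma qfE n (A : 'M[R]_n) v :
  qf A v = \sum_j (\sum_i v 0 i * A i j) * v 0 j.
Proof.
rewrite /qf mxE; apply: eq_bigr => j _; rewrite !mxE.
by [].
Qed.

Lemma qf_diag n (M : 'M[R]_n) (lo hi : R) v :
  (forall i j, i != j -> M i j = 0) -> (forall i, lo <= M i i <= hi) ->
  lo * dotv v <= qf M v <= hi * dotv v.
Proof.
move=> Hd Hb.
have -> : qf M v = \sum_j M j j * v 0 j ^+ 2.
  rewrite qfE; apply: eq_bigr => j _.
  rewrite (bigD1 j) //= big1 ?addr0 => [|i /Hd ->]; last by rewrite mulr0.
  by rewrite expr2 mulrA [v 0 j * _]mulrC.
rewrite dotvE !mulr_sumr; apply/andP; split; apply: ler_sum => i _;
  (apply: ler_wpM2r; first exact: sqr_ge0); by case/andP: (Hb i).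
Qed.

Lemma qf_orth n (Q M : 'M[R]_n) v : Q *m Q^T = 1%:M ->
  qf (Q^T *m M *m Q) v = qf M (v *m Q^T) /\ dotv (v *m Q^T) = dotv v.
Proof.
move=> HQ; have HQ' := mulmx1C HQ.
rewrite /qf /dotv !trmx_mul !trmxK; split; first by rewrite !mulmxA.
by rewrite -(mulmxA v) (mulmxA Q^T) HQ' mul1mx.
Qed.

Lemma qf_diag_orth n (Q M : 'M[R]_n) (lo hi : R) v : Q *m Q^T = 1%:M ->
  (forall i j, i != j -> M i j = 0) -> (forall i, lo <= M i i <= hi) ->
  lo * dotv v <= qf (Q^T *m M *m Q) v <= hi * dotv v.
Proof.
move=> HQ Hd Hb; have [-> <-] := qf_orth M v HQ; exact: qf_diag.
Qed.

End Basic.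

Section RealEig.
Variable R : rcfType.

Lemma Re_sum n (F : 'I_n -> R[i]) : complex.Re (\sum_i F i) = \sum_i complex.Re (F i).
Proof. by apply: (big_ind2 (fun c r => complex.Re c = r)) => // -[a b] c [d e] f /= <- <-. Qed.
Lemma Im_sum n (F : 'I_n -> R[i]) : complex.Im (\sum_i F i) = \sum_i complex.Im (F i).
Proof. by apply: (big_ind2 (fun c r => complex.Im c = r)) => // -[a b] c [d e] f /= <- <-. Qed.

Lemma ReM (z w : R[i]) : complex.Re (z * w) = complex.Re z * complex.Re w - complex.Im z * complex.Im w.
Proof. by case: z => a b; case: w => c d. Qed.
Lemma ImM (z w : R[i]) : complex.Im (z * w) = complex.Im z * complex.Re w + complex.Re z * complex.Im w.
Proof. by case: z => a b; case: w => c d /=; rewrite addrC. Qed.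
Lemma ReMr (z : R[i]) (r : R) : complex.Re (z * real_complex R r) = complex.Re z * r.
Proof. by case: z => a b /=; rewrite mulr0 subr0. Qed.
Lemma ImMr (z : R[i]) (r : R) : complex.Im (z * real_complex R r) = complex.Im z * r.
Proof. by case: z => a b /=; rewrite mulr0 add0r. Qed.

Lemma sym_real_root n (A : 'M[R]_n.+1) : A^T = A ->
  exists a, root (char_poly A) a.
Proof.
move=> sA.
pose f := real_complex R.
pose Ac := map_mx f A.
have : size (char_poly Ac) != 1%N by rewrite size_char_poly.
case/closed_rootP => z; rewrite -eigenvalue_root_char => /eigenvalueP [v Hv nz].
pose x := map_mx (@complex.Re R) v; pose y := map_mx (@complex.Im R) v.
pose a := complex.Re z; pose b := complex.Im z.
have Hx : x *m A = a *: x - b *: y.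
  apply/rowP => j; move/rowP: Hv => /(_ j).
  rewrite !mxE => /(congr1 (@complex.Re R)); rewrite Re_sum ReM => <-.
  by apply: eq_bigr => i _; rewrite !mxE ReMr.
have Hy : y *m A = b *: x + a *: y.
  apply/rowP => j; move/rowP: Hv => /(_ j).
  rewrite !mxE => /(congr1 (@complex.Im R)); rewrite Im_sum ImM => <-.
  by apply: eq_bigr => i _; rewrite !mxE ImMr.
have tr11 : forall (u w : 'rV[R]_n.+1) (M : 'M[R]_n.+1), M^T = M ->
    (u *m M *m w^T) 0 0 = (w *m M *m u^T) 0 0.
  move=> u w M sM; transitivity ((u *m M *m w^T)^T 0 0); first by rewrite [RHS]mxE.
  by rewrite !trmx_mul trmxK sM mulmxA.
have e1 := tr11 x y A sA.
rewrite Hx Hy !mulmxDl ?mulNmx -!scalemxAl !mxE in e1.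
have Exy : \sum_j y 0 j * x^T j 0 = \sum_j x 0 j * y^T j 0.
  by apply: eq_bigr => j _; rewrite !mxE mulrC.
rewrite Exy -/(dotv x) in e1.
have hb : b * (dotv x + dotv y) = 0.
  rewrite /dotv !mxE; move: e1; set p := \sum_j _ * _; set q := \sum_j _ * _; set r := \sum_j _ * _.
  by move=> e; transitivity ((b * r + a * p) - (a * p - b * q)); [ring | rewrite e subrr].
have xy : (x != 0) || (y != 0).
  apply: contraNT nz; rewrite negb_or !negbK => /andP[/eqP x0 /eqP y0].
  apply/eqP/rowP => i; move/rowP: x0 => /(_ i); move/rowP: y0 => /(_ i).
  rewrite !mxE; case: (v 0 i) => c d /= -> ->; by [].
have pos : 0 < dotv x + dotv y.
  case/orP: xy => [/dotv_gt0 h | /dotv_gt0 h].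
    by apply: (lt_le_trans h); rewrite lerDl dotv_ge0.
  by apply: (lt_le_trans h); rewrite lerDr dotv_ge0.
have b0 : b = 0.
  by move/eqP: hb; rewrite mulf_eq0 (gt_eqF pos) orbF => /eqP.
rewrite b0 scale0r subr0 in Hx; rewrite b0 scale0r add0r in Hy.
exists a; rewrite -eigenvalue_root_char; apply/eigenvalueP.
by case/orP: xy => [h|h]; [exists x | exists y].
Qed.
End RealEig.

Section Spectral.
Variable R : rcfType.

Lemma mx11E (M : 'M[R]_1) : M = (M 0 0)%:M.
Proof. exact: mx11_scalar. Qed.

Lemma householder n (u : 'rV[R]_n.+1) : dotv u = 1 ->
  exists H : 'M[R]_n.+1, H *m H^T = 1%:M /\ row 0 H = u.
Proof.
move=> du.
pose e : 'rV[R]_n.+1 := 'e_0.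
have eE : forall M : 'M[R]_n.+1, row 0 M = e *m M by move=> M; rewrite rowE.
have [w wE] : {w | w = e - u} by exists (e - u).
have [w0|wn0] := eqVneq w 0.
  exists 1%:M; rewrite trmx1 mulmx1; split => //.
  by rewrite eE mulmx1; apply/eqP; rewrite -subr_eq0 -wE w0.
have [s sE'] : {s | s = dotv w} by exists (dotv w).
have s0 : s != 0 by rewrite sE' dotv_eq0.
have [c cE] : {c | c = 2 / s} by exists (2 / s).
exists (1%:M - c *: (w^T *m w)).
have HT : (1%:M - c *: (w^T *m w))^T = 1%:M - c *: (w^T *m w).
  by rewrite linearB /= linearZ /= trmx1 trmx_mul trmxK.
have ww : w *m w^T = s%:M by rewrite [LHS]mx11E sE'.
split.
  rewrite HT mulmxBl !mulmxBr mul1mx mulmx1 -!scalemxAl -!scalemxAr.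
  rewrite mul1mx mulmxA -(mulmxA w^T) ww mul_mx_scalar -scalemxAl !scalerA.
  have -> : c * (c * s) = c + c by rewrite cE; field.
  by rewrite scalerDl opprB addrK subrK.
have ez : forall z : 'rV[R]_n.+1, (e *m z^T) 0 0 = z 0 0.
  move=> z; rewrite mxE (bigD1 0) //= big1 => [|i ni0].
    by rewrite addr0 /e !mxE eqxx /= mul1r.
  by rewrite /e !mxE eqxx /=; case: eqP ni0 => [->|_ _]; rewrite ?eqxx ?mul0r.
have ze : forall z : 'rV[R]_n.+1, (z *m e^T) 0 0 = z 0 0.
  move=> z; rewrite -[z *m e^T]trmxK trmx_mul trmxK [in LHS]mxE; exact: ez.
have ewT : e *m w^T = (1 - u 0 0)%:M.
  by rewrite [LHS]mx11E ez wE !mxE eqxx.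
have sE : s = 2 * (1 - u 0 0).
  have h1 : e *m e^T = 1%:M by rewrite [LHS]mx11E ez /e mxE !eqxx.
  have h2 : e *m u^T = (u 0 0)%:M by rewrite [LHS]mx11E ez.
  have h3 : u *m e^T = (u 0 0)%:M by rewrite [LHS]mx11E ze.
  have h4 : u *m u^T = 1%:M by rewrite [LHS]mx11E -/(dotv u) du.
  rewrite sE' wE /dotv linearB /= mulmxBl !mulmxBr h1 h2 h3 h4 !mxE /=.
  ring.
rewrite eE mulmxBr mulmx1 -scalemxAr mulmxA ewT mul_scalar_mx scalerA.
have -> : c * (1 - u 0 0) = 1.
  rewrite cE sE; field.
  by apply: contraNneq s0 => h; rewrite sE h mulr0.
by rewrite scale1r wE opprB addrC subrK.
Qed.

Definition specmx n (A Q : 'M[R]_n) (D : 'rV[R]_n) :=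
  Q *m Q^T = 1%:M /\ A = Q^T *m diag_mx D *m Q.

Lemma dotvZ n (k : R) (v : 'rV[R]_n) : dotv (k *: v) = k ^+ 2 * dotv v.
Proof. by rewrite /dotv linearZ /= -scalemxAl -scalemxAr scalerA !mxE expr2. Qed.

Theorem spectral n (A : 'M[R]_n) : A^T = A -> exists Q D, specmx A Q D.
Proof.
elim: n A => [|n IH] A sA.
  exists 1%:M, 0; split; first by rewrite trmx1 mulmx1.
  by apply/matrixP => -[].
have [a] := sym_real_root sA.
rewrite -eigenvalue_root_char => /eigenvalueP [v Hv nv].
pose u := (Num.sqrt (dotv v))^-1 *: v.
have dv := dotv_gt0 nv.
have du : dotv u = 1.
  rewrite dotvZ exprVn sqr_sqrtr ?ltW // mulVf //; exact: lt0r_neq0.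
have Hu : u *m A = a *: u.
  by rewrite -scalemxAl Hv !scalerA mulrC.
have [H [HH Hrow]] := householder du.
have HH' := mulmx1C HH.
have [B EBd] : {B : 'M[R]_(1 + n) | B = H *m A *m H^T} by exists (H *m A *m H^T).
have sB : B^T = B by rewrite EBd !trmx_mul trmxK sA mulmxA.
have rowB : row 0 B = a *: row 0 1%:M.
  by rewrite EBd !row_mul Hrow Hu -scalemxAl -Hrow -row_mul HH.
have B0 : forall j, B 0 j = a * (0 == j)%:R.
  by move=> j; move/rowP: rowB => /(_ j); rewrite !mxE.
pose A' := drsubmx B.
have sA' : A'^T = A' by rewrite /A' trmx_drsub sB.
have [Q' [D' [HQ' EA']]] := IH A' sA'.
have ul : ulsubmx B = a%:M.
  apply/matrixP => i j; rewrite !ord1 !mxE.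
  have -> : lshift n (0 : 'I_1) = 0 by apply: val_inj.
  by rewrite B0 eqxx mulr1.
have ur : ursubmx B = 0.
  apply/matrixP => i j; rewrite !ord1 !mxE.
  have -> : lshift n (0 : 'I_1) = 0 by apply: val_inj.
  by rewrite B0 mulr_natr.
have dl : dlsubmx B = 0 by rewrite -sB -trmx_ursub ur trmx0.
have EB : B = block_mx a%:M 0 0 A' by rewrite -ul -ur -dl /A' submxK.
suff : exists Q D, @specmx (1 + n) A Q D by [].
exists (block_mx (1%:M : 'M_1) 0 0 Q' *m (H : 'M_(1 + n))), (row_mx (a%:M : 'rV_1) D'); split.
  rewrite trmx_mul mulmxA -(mulmxA _ H) HH mulmx1 tr_block_mx mulmx_block.
  rewrite !trmx0 trmx1 !mulmx0 !mul0mx ?mulmx1 ?mul1mx !addr0 !add0r HQ'.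
  by rewrite -scalar_mx_block.
rewrite trmx_mul tr_block_mx !trmx0 trmx1 diag_mx_row.
have -> : diag_mx (a%:M : 'rV_1) = a%:M.
  by apply/matrixP => i j; rewrite !ord1 !mxE eqxx.
have Eblk : block_mx (1%:M : 'M_1) 0 0 Q'^T *m block_mx a%:M 0 0 (diag_mx D')
   *m block_mx 1%:M 0 0 Q' = B.
  rewrite !mulmx_block !mulmx0 !mul0mx ?mulmx1 ?mul1mx !addr0 !add0r -EA' EB.
  by rewrite mul0mx.
transitivity ((H : 'M_(1+n))^T *m (block_mx (1%:M : 'M_1) 0 0 Q'^T *m block_mx a%:M 0 0 (diag_mx D')
   *m block_mx 1%:M 0 0 Q') *m (H : 'M_(1 + n))); last by rewrite !mulmxA.
rewrite Eblk EBd.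
by rewrite !mulmxA HH' mul1mx -mulmxA HH' mulmx1.
Qed.
End Spectral.

Section Eigs.
Variable R : rcfType.

Lemma mem_eigs n (A : 'M[R]_n) x : (x \in eigs A) = root (char_poly A) x.
Proof.
have := roots_on_rootsR (monic_neq0 (char_poly_monic A)) x.
by rewrite /eigs => <-; rewrite in_itv.
Qed.

Lemma spec_eig n (A Q : 'M[R]_n) D : specmx A Q D -> forall i, D 0 i \in eigs A.
Proof.
move=> [HQ EA] i; rewrite mem_eigs -eigenvalue_root_char; apply/eigenvalueP.
exists (row i Q).
  rewrite {1}EA !mulmxA -row_mul HQ row1 -rowE row_diag_mx -scalemxAl -rowE //.
apply: contraTneq isT => r0.
have : row i (Q *m Q^T) = 0 by rewrite row_mul r0 mul0mx.
rewrite HQ => /rowP /(_ i); rewrite !mxE eqxx => /eqP; by rewrite oner_eq0.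
Qed.


Lemma bigmax_gen (i : R) (s : seq R) :
  let M := \big[Num.max/i]_(x <- s) x in
  ((M == i) || (M \in s)) /\ i <= M /\ forall y, y \in s -> y <= M.
Proof.
elim: s => [|x s [IH1 [IH2 IH3]]] /=; first by rewrite big_nil eqxx.
rewrite big_cons; set M := \big[_/_]_(_ <- _) _ in IH1 IH2 IH3 *.
split; last split.
- rewrite maxEle; case: ifP => _; last by rewrite inE eqxx orbT.
  by case/orP: IH1 => [->//|h]; rewrite inE h !orbT.
- by rewrite le_max IH2 orbT.
- move=> y; rewrite inE => /orP[/eqP ->|/IH3 h]; first by rewrite le_max lexx.
  by rewrite le_max h orbT.
Qed.

Lemma bigmin_gen (i : R) (s : seq R) :
  let M := \big[Num.min/i]_(x <- s) x in
  ((M == i) || (M \in s)) /\ M <= i /\ forall y, y \in s -> M <= y.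
Proof.
elim: s => [|x s [IH1 [IH2 IH3]]] /=; first by rewrite big_nil eqxx.
rewrite big_cons; set M := \big[_/_]_(_ <- _) _ in IH1 IH2 IH3 *.
split; last split.
- rewrite minEle; case: ifP => _; first by rewrite inE eqxx orbT.
  by case/orP: IH1 => [->//|h]; rewrite inE h !orbT.
- by rewrite ge_min IH2 orbT.
- move=> y; rewrite inE => /orP[/eqP ->|/IH3 h]; first by rewrite ge_min lexx.
  by rewrite ge_min h orbT.
Qed.

Lemma eigs_nonempty n (A : 'M[R]_n.+1) : A^T = A -> eigs A != [::].
Proof.
move=> sA; have [Q [D sp]] := spectral sA.
have := spec_eig sp 0; by case: (eigs A).
Qed.

Lemma lmax_in n (A : 'M[R]_n) : (0 < n)%N -> A^T = A ->
  lambda_max A \in eigs A /\ forall y, y \in eigs A -> y <= lambda_max A.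
Proof.
case: n A => // n A _ sA; have := eigs_nonempty sA.
rewrite /lambda_max; case: (eigs A) => // x s _ /=.
have [h1 [h2 h3]] := bigmax_gen x (x :: s); split => //.
by case/orP: h1 => [/eqP ->|//]; rewrite inE eqxx.
Qed.

Lemma lmin_in n (A : 'M[R]_n) : (0 < n)%N -> A^T = A ->
  lambda_min A \in eigs A /\ forall y, y \in eigs A -> lambda_min A <= y.
Proof.
case: n A => // n A _ sA; have := eigs_nonempty sA.
rewrite /lambda_min; case: (eigs A) => // x s _ /=.
have [h1 [h2 h3]] := bigmin_gen x (x :: s); split => //.
by case/orP: h1 => [/eqP ->|//]; rewrite inE eqxx.
Qed.

Lemma rayleigh n (A : 'M[R]_n) v : A^T = A ->
  lambda_min A * dotv v <= qf A v <= lambda_max A * dotv v.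
Proof.
case: n A v => [|n] A v sA.
  by rewrite /qf /dotv !mxE !big_ord0 !mulr0 lexx.
have [Q [D sp]] := spectral sA.
have [HQ EA] := sp.
have -> : qf A v = qf (Q^T *m diag_mx D *m Q) v by rewrite -EA.
apply: qf_diag_orth => // [i j nij|i].
  by rewrite mxE (negbTE nij) mulr0n.
rewrite mxE eqxx mulr1n.
have /(lmin_in (ltn0Sn n) sA).2 -> := spec_eig sp i.
by have /(lmax_in (ltn0Sn n) sA).2 -> := spec_eig sp i.
Qed.

Lemma eig_vec n (A : 'M[R]_n) x : x \in eigs A ->
  exists v, v != 0 /\ qf A v = x * dotv v.
Proof.
rewrite mem_eigs -eigenvalue_root_char => /eigenvalueP [v Hv nv].
by exists v; split => //; rewrite /qf Hv -scalemxAl mxE.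
Qed.

Lemma lmin_ge n (A : 'M[R]_n) c : (0 < n)%N -> A^T = A ->
  (forall v, c * dotv v <= qf A v) -> c <= lambda_min A.
Proof.
move=> n0 sA H; have [/eig_vec [v [nv e]] _] := lmin_in n0 sA.
by have := H v; rewrite e ler_pM2r // dotv_gt0.
Qed.

Lemma lmax_le n (A : 'M[R]_n) c : (0 < n)%N -> A^T = A ->
  (forall v, qf A v <= c * dotv v) -> lambda_max A <= c.
Proof.
move=> n0 sA H; have [/eig_vec [v [nv e]] _] := lmax_in n0 sA.
by have := H v; rewrite e ler_pM2r // dotv_gt0.
Qed.

End Eigs.

Section Kron.
Variable R : rcfType.

Lemma tens11 m n : (1%:M : 'M[R]_m) *t (1%:M : 'M[R]_n) = 1%:M.
Proof.
apply/matrixP => i j.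
case: (mxtens_indexP i) => i1 i2; case: (mxtens_indexP j) => j1 j2.
rewrite tensmxE !mxE (inj_eq (can_inj (@mxtens_indexK _ _))) xpair_eqE.
by case: (i1 == j1); case: (i2 == j2); rewrite /= ?mulr1 ?mul0r ?mulr0.
Qed.

Lemma kron_rayleigh m n (A : 'M[R]_m) (B : 'M[R]_n) x :
  (0 < m)%N -> (0 < n)%N -> A^T = A -> B^T = B ->
  0 <= lambda_min A -> 0 <= lambda_min B ->
  lambda_min A * lambda_min B * dotv x <= qf (A *t B) x
    <= lambda_max A * lambda_max B * dotv x.
Proof.
move=> m0 n0 sA sB pA pB.
have [P [a spA]] := spectral sA; have [Q [b spB]] := spectral sB.
have [HP EA] := spA; have [HQ EB] := spB.
have -> : A *t B = (P *t Q)^T *m (diag_mx a *t diag_mx b) *m (P *t Q).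
  by rewrite trmx_tens !tensmx_mul -EA -EB.
apply: qf_diag_orth.
- by rewrite trmx_tens tensmx_mul HP HQ tens11.
- move=> i j; case: (mxtens_indexP i) => i1 i2; case: (mxtens_indexP j) => j1 j2.
  rewrite (inj_eq (can_inj (@mxtens_indexK _ _))) xpair_eqE negb_and tensmxE !mxE.
  by case/orP => /negbTE ->; rewrite ?mulr0n ?mul0r ?mulr0.
- move=> i; case: (mxtens_indexP i) => i1 i2; rewrite tensmxE !mxE !eqxx !mulr1n.
  have [_ hmA] := lmin_in m0 sA; have [_ hMA] := lmax_in m0 sA.
  have [_ hmB] := lmin_in n0 sB; have [_ hMB] := lmax_in n0 sB.
  have ea := spec_eig spA i1; have eb := spec_eig spB i2.
  apply/andP; split; apply: ler_pM => //; by [apply: hmA | apply: hmB | apply: hMA | apply: hMB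
     | apply: le_trans pA (hmA _ ea) | apply: le_trans pB (hmB _ eb)].
Qed.

Lemma sqrt_psd_spec n (S : 'M[R]_n) : posdefmx S ->
  (sqrt_psd S)^T = sqrt_psd S /\ sqrt_psd S *m sqrt_psd S = S.
Proof.
move=> [sS pS].
suff: psdmx (sqrt_psd S) /\ sqrt_psd S *m sqrt_psd S = S by case=> -[].
rewrite /sqrt_psd; apply: (epsilon_spec _ (fun T : 'M[R]_n => psdmx T /\ T *m T = S)).
have [Q [D spS]] := spectral sS; have [HQ ES] := spS.
have Dpos : forall i, 0 <= D 0 i.
  move=> i; have /eig_vec [v [nv e]] := spec_eig spS i.
  have := pS v nv; rewrite -/(qf S v) e => h.
  by apply: ltW; rewrite -(pmulr_lgt0 _ (dotv_gt0 nv)).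
pose E := \row_j Num.sqrt (D 0 j).
exists (Q^T *m diag_mx E *m Q); split; first split.
- by rewrite !trmx_mul trmxK tr_diag_mx mulmxA.
- move=> v; have := @qf_diag_orth _ _ Q (diag_mx E) 0 (\sum_(j < n) E 0 j) v HQ.
  case/(_ _ _)/andP => //.
  + by move=> i j nij; rewrite mxE (negbTE nij) mulr0n.
  + move=> i; rewrite mxE eqxx mulr1n mxE sqrtr_ge0 /=.
    rewrite (bigD1 i) //= mxE lerDl sumr_ge0 // => j _; by rewrite mxE sqrtr_ge0.
  by rewrite mul0r.
- rewrite !mulmxA -(mulmxA _ Q) HQ mulmx1 -(mulmxA Q^T) mulmx_diag ES.
  congr (_ *m diag_mx _ *m _); apply/rowP => j; rewrite !mxE -expr2 sqr_sqrtr //.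
Qed.

End Kron.

Section Misc.
Variable R : rcfType.

Lemma gram n p (M : 'M[R]_(n, p)) v : qf (M *m M^T) v = dotv (v *m M).
Proof. by rewrite /qf /dotv trmx_mul !mulmxA. Qed.

Lemma qf_sum n I (r : seq I) (P : pred I) (F : I -> 'M[R]_n) v :
  qf (\sum_(i <- r | P i) F i) v = \sum_(i <- r | P i) qf (F i) v.
Proof. by rewrite /qf mulmx_sumr mulmx_suml summxE. Qed.

Lemma sandwich n (S C : 'M[R]_n) v : S^T = S ->
  qf (S *m C *m S) v = qf C (v *m S).
Proof. by move=> sS; rewrite /qf trmx_mul sS !mulmxA. Qed.

Lemma dotvS n (S Sig : 'M[R]_n) v : S^T = S -> S *m S = Sig ->
  dotv (v *m S) = qf Sig v.
Proof. by move=> sS SS; rewrite /dotv /qf trmx_mul sS -SS !mulmxA. Qed.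

Lemma lmin_psd n (A : 'M[R]_n) : (0 < n)%N -> A^T = A ->
  (forall v, 0 <= qf A v) -> 0 <= lambda_min A.
Proof. by move=> n0 sA H; apply: lmin_ge => // v; rewrite mul0r. Qed.

Lemma lmin_le_lmax n (A : 'M[R]_n) : (0 < n)%N -> A^T = A ->
  lambda_min A <= lambda_max A.
Proof. by move=> n0 sA; have [h _] := lmin_in n0 sA; exact: (lmax_in n0 sA).2. Qed.

Lemma lmin_pos n (A : 'M[R]_n) : (0 < n)%N -> posdefmx A -> 0 < lambda_min A.
Proof.
move=> n0 [sA pA]; have [/eig_vec [v [nv e]] _] := lmin_in n0 sA.
by have := pA v nv; rewrite -/(qf A v) e pmulr_lgt0 // dotv_gt0.
Qed.

End Misc.


Unset Implicit Arguments.

Theorem mainTheorem2 (R : rcfType) (L d k m : nat)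
  (W : forall l : nat, 'M[R]_(width d k m L l.+1, width d k m L l))
  (Sigma : 'M[R]_d) :
  (1 <= L)%N -> (0 < d)%N -> (0 < k)%N -> (maxn d k < m)%N ->
  posdefmx Sigma ->
  (forall l : 'I_L, 0 < alpha W l) ->
  let G := GO W Sigma in
  let gamma := fun l : 'I_L => alpha W l / \sum_(i < L) alpha W i in
  let c := fun l : 'I_L =>
     kappa_mx (Wtop W l) ^+ 2 * kappa_mx (Wbot W l)^T ^+ 2 in
  posdefmx G /\
  kappa_sym G <= kappa_sym Sigma * \sum_(l < L) gamma l * c l /\
  kappa_sym Sigma * \sum_(l < L) gamma l * c l
    <= kappa_sym Sigma * \big[Num.max/0]_(l < L) c l.
Proof.
move=> hL hd hk hm pS Ha G gamma c.
have [sS SS] := sqrt_psd_spec pS.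
have [sSig _] := pS.
have lmS := lmin_pos hd pS.
have lMS : lambda_min Sigma <= lambda_max Sigma := lmin_le_lmax hd sSig.
have hkl : forall l : 'I_L, (k <= width d k m L l.+1)%N.
  move=> l; rewrite /width /=; case: (_ == L) => //.
  by apply: ltnW; apply: leq_ltn_trans hm; exact: leq_maxr.
have hdl : forall l : 'I_L, (d <= width d k m L l)%N.
  move=> l; rewrite /width; case: (_ == 0)%N => //; case: eqP => [e|_].
    by have := ltn_ord l; rewrite e ltnn.
  by apply: ltnW; apply: leq_ltn_trans hm; exact: leq_maxl.
pose At l := Wtop W l *m (Wtop W l)^T.
pose Ct l := (Wbot W l)^T *m Wbot W l.
pose Bt l := sqrt_psd Sigma *m Ct l *m sqrt_psd Sigma.
have sAt : forall l, (At l)^T = At l by move=> l; rewrite /At trmx_mul trmxK.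
have sCt : forall l, (Ct l)^T = Ct l by move=> l; rewrite /Ct trmx_mul trmxK.
have sBt : forall l, (Bt l)^T = Bt l.
  by move=> l; rewrite /Bt /Ct !trmx_mul trmxK sS !mulmxA.
have pAt : forall l, 0 <= lambda_min (At l).
  by move=> l; apply: lmin_psd => // v; rewrite /At gram dotv_ge0.
have pCt : forall l, 0 <= lambda_min (Ct l).
  move=> l; apply: lmin_psd => // v.
  by rewrite /Ct -{2}(trmxK (Wbot W l)) gram dotv_ge0.
have MAt : forall l, 0 <= lambda_max (At l).
  by move=> l; apply: le_trans (pAt l) (lmin_le_lmax hk (sAt l)).
have MCt : forall l, 0 <= lambda_max (Ct l).
  by move=> l; apply: le_trans (pCt l) (lmin_le_lmax hd (sCt l)).
have qBt : forall l v, lambda_min (Ct l) * lambda_min Sigma * dotv v <= qf (Bt l) v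
     <= lambda_max (Ct l) * lambda_max Sigma * dotv v.
  move=> l v; rewrite /Bt sandwich //.
  have /andP[h1 h2] := rayleigh (v *m sqrt_psd Sigma) (sCt l).
  have /andP[h3 h4] := rayleigh v sSig.
  rewrite (dotvS _ sS SS) in h1 h2.
  apply/andP; split.
    by apply: le_trans h1; rewrite -mulrA; apply: ler_wpM2l.
  by apply: le_trans h2 _; rewrite -mulrA; apply: ler_wpM2l.
have lmBt : forall l, lambda_min (Ct l) * lambda_min Sigma <= lambda_min (Bt l).
  by move=> l; apply: lmin_ge => // v; case/andP: (qBt l v).
have lMBt : forall l, lambda_max (Bt l) <= lambda_max (Ct l) * lambda_max Sigma.
  by move=> l; apply: lmax_le => // v; case/andP: (qBt l v).
have pBt : forall l, 0 <= lambda_min (Bt l).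
  by move=> l; apply: le_trans (lmBt l); rewrite mulr_ge0 // ltW.
have EG : G = \sum_(l < L) (At l *t Bt l) by [].
have kd0 : (0 < k * d)%N by rewrite muln_gt0 hk hd.
have qT : forall l v, lambda_min (At l) * lambda_min (Bt l) * dotv v <= qf (At l *t Bt l) v
     <= lambda_max (At l) * lambda_max (Bt l) * dotv v.
  by move=> l v; apply: kron_rayleigh.
have Eal : forall l, alpha W l = lambda_min (At l) * lambda_min (Ct l).
  move=> l; rewrite /alpha /sigma_min (hkl l) (hdl l) trmxK.
  by rewrite sqr_sqrtr ?sqr_sqrtr; [| exact: (pCt l) | exact: (pAt l)].
have Ecl : forall l, c l * alpha W l = lambda_max (At l) * lambda_max (Ct l).
  move=> l; have hal := Ha l; rewrite /alpha in hal *.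
  have st0 : sigma_min (Wtop W l) != 0.
    by apply: contraTneq hal => ->; rewrite expr0n mul0r ltxx.
  have sb0 : sigma_min (Wbot W l)^T != 0.
    by apply: contraTneq hal => ->; rewrite expr0n mulr0 ltxx.
  have -> : lambda_max (At l) = sigma_max (Wtop W l) ^+ 2.
    by rewrite /sigma_max (hkl l) sqr_sqrtr //; exact: MAt.
  have -> : lambda_max (Ct l) = sigma_max (Wbot W l)^T ^+ 2.
    by rewrite /sigma_max (hdl l) trmxK sqr_sqrtr //; exact: MCt.
  rewrite /c /kappa_mx; field.
  by rewrite st0 sb0.
pose sa := \sum_(l < L) alpha W l.
pose sb := \sum_(l < L) lambda_max (At l) * lambda_max (Ct l).
have qGlow : forall v, lambda_min Sigma * sa * dotv v <= qf G v.
  move=> v; rewrite EG qf_sum /sa mulr_sumr mulr_suml; apply: ler_sum => l _.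
  case/andP: (qT l v) => h _; apply: le_trans h; apply: ler_wpM2r; first exact: dotv_ge0.
  rewrite Eal mulrC -mulrA; apply: ler_wpM2l => //.
have qGup : forall v, qf G v <= lambda_max Sigma * sb * dotv v.
  move=> v; rewrite EG qf_sum /sb mulr_sumr mulr_suml; apply: ler_sum => l _.
  case/andP: (qT l v) => _ h; apply: le_trans h _; apply: ler_wpM2r; first exact: dotv_ge0.
  rewrite mulrCA; apply: ler_wpM2l; [exact: MAt | rewrite mulrC; exact: lMBt].
have sa0 : 0 < sa.
  rewrite /sa (bigD1 (Ordinal hL)) //=; apply: lt_le_trans (Ha (Ordinal hL)) _.
  by rewrite lerDl sumr_ge0 // => i _; exact: ltW.
have sG : G^T = G.
  rewrite EG linear_sum /=; apply: eq_bigr => l _.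
  by rewrite trmx_tens sAt sBt.
have lmG : lambda_min Sigma * sa <= lambda_min G by apply: lmin_ge.
have lMG : lambda_max G <= lambda_max Sigma * sb by apply: lmax_le.
have lmG0 : 0 < lambda_min G by apply: lt_le_trans lmG; rewrite mulr_gt0.
have lGle := lmin_le_lmax kd0 sG.
have Esum : \sum_(l < L) gamma l * c l = sb / sa.
  rewrite /gamma /sb mulr_suml; apply: eq_bigr => l _.
  by rewrite -Ecl [LHS]mulrC mulrA.
have kS0 : 0 <= kappa_sym Sigma.
  by rewrite /kappa_sym divr_ge0 // ltW // (lt_le_trans lmS lMS).
split.
  split => // v nv; change (0 < qf G v); apply: lt_le_trans (qGlow v).
  by rewrite !mulr_gt0 // dotv_gt0.
split.
  rewrite Esum /kappa_sym.
  have -> : lambda_max Sigma / lambda_min Sigma * (sb / sa)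
      = (lambda_max Sigma * sb) / (lambda_min Sigma * sa).
    by field; rewrite (gt_eqF lmS) (gt_eqF sa0).
  apply: ler_pM => //.
  - exact: le_trans (ltW lmG0) lGle.
  - by rewrite invr_ge0 ltW.
  - by rewrite lef_pV2 ?posrE // mulr_gt0.
apply: ler_wpM2l => //.
apply: (@le_trans _ _ (\sum_(l < L) gamma l * \big[Num.max/0]_(l < L) c l)).
  apply: ler_sum => l _; apply: ler_wpM2l; last exact: le_bigmax.
  by rewrite /gamma divr_ge0 // ltW.
rewrite -mulr_suml /gamma -mulr_suml -/sa mulfV ?mul1r //.
by rewrite gt_eqF.
Qed.
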